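(* Let $\lambda_1>\lambda_0>0$ and $a,b>0$ with $\lambda_1-\lambda_0>\frac1a+\frac1b$, and let $0<\alpha^*<b/a<\beta^*$ be the optimal stopping boundaries described in the context. Let $X$ be a Poisson process with $X_0=0$ which under the probability measure $\mathsf P_0$ has intensity $\lambda_0$, and set $L_t=\exp\{X_t\log(\lambda_1/\lambda_0)-(\lambda_1-\lambda_0)t\}$. For $\varphi>0$ define $\tau^*(\varphi)=\inf\{t\ge 0:\varphi L_t\notin(\alpha^*,\beta^* )\}$. Then: (1) for any $\varphi_0\in(\alpha^*,\beta^* )$, $\tau^*(\varphi)\to\tau^*(\varphi_0)$ $\mathsf P_0$-a.s. as $\varphi\to\varphi_0$; (2) $\tau^*(\varphi)\to 0$ $\mathsf P_0$-a.s. as $\varphi\downarrow\alpha^*$; (3) $\lim_{\varphi\uparrow\beta^*}\tau^*(\varphi)=\theta(\beta^* )$ $\mathsf P_0$-a.s., where $\theta(\beta^* ):=\inf\{t\ge0: L_t\notin(\alpha^*/\beta^*,1]\}$.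
   Context: Setting: one observes a Poisson process $X$ whose intensity is $\lambda_0$ or $\lambda_1$ ($\lambda_1>\lambda_0>0$). $\mathsf P_0$ ($\mathsf E_0$) denotes the law (expectation) under which $X$ is Poisson with intensity $\lambda_0$, $X_0=0$; $\mathbb S$ is the set of stopping times of the natural filtration of $X$. For a prior parameter $\psi>0$ (prior probability $\psi/(1+\psi)$ of intensity $\lambda_1$) and $\tau\in\mathbb S$, the Bayes cost is $\bar J(\psi;\tau)=\frac{1}{1+\psi}\mathsf E_0\big[\int_0^\tau(1+\psi L_t)\,dt+(a\psi L_\tau)\wedge b\big]$. When $\lambda_1-\lambda_0>1/a+1/b$ there exist unique constants $0<\alpha^*<b/a<\beta^*$ (independent of $\psi$) such that for every $\psi>0$ the stopping time $\inf\{t\ge0:\psi L_t\notin(\alpha^*,\beta^* )\}$ minimizes $\bar J(\psi;\cdot)$ over $\mathbb S$; these are the $\alpha^*,\beta^*$ in the statement. *)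

(* Defs.v *)
From HB Require Import structures.
From mathcomp Require Import all_boot all_order all_algebra.
From mathcomp Require Import all_classical all_reals all_analysis.
Set Implicit Arguments. Unset Strict Implicit. Unset Printing Implicit Defensive.
Import Order.TTheory GRing.Theory Num.Theory.
Import numFieldNormedType.Exports.
Local Open Scope classical_set_scope.
Local Open Scope ring_scope.

Section defs.
Context {d : measure_display} {Omega : measurableType d} {R : realType}.

Definition poisson_process (P : probability Omega R) (lam : R)
    (X : R -> Omega -> nat) : Prop :=
  [/\ forall w, X 0 w = 0%N,
      forall w s t, 0 <= s -> s <= t -> (X s w <= X t w)%N,
      forall w t, 0 <= t -> exists2 delta : R, 0 < delta &
         forall s, t <= s -> s < t + delta -> X s w = X t w,
      forall t (k : nat), measurable (X t @^-1` [set k])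
    & forall (n : nat) (t : nat -> R) (k : nat -> nat),
        t 0%N = 0 -> (forall i, (i < n)%N -> t i < t i.+1) ->
        P (\bigcap_(i in [set i : nat | (i < n)%N])
              [set w | (X (t i.+1) w - X (t i) w)%N = k i])
        = (\prod_(i < n) poisson_pmf (lam * (t i.+1 - t i)) (k i))%:E ].

Definition lik (lam0 lam1 : R) (X : R -> Omega -> nat) (t : R) (w : Omega) : R :=
  expR ((X t w)%:R * ln (lam1 / lam0) - (lam1 - lam0) * t).

Definition nat_filtration (X : R -> Omega -> nat) (t : R) : set (set Omega) :=
  <<s [set A | exists s (k : nat), [/\ 0 <= s, s <= t & A = X s @^-1` [set k]]] >>.

Definition stopping_time (X : R -> Omega -> nat) (tau : Omega -> \bar R) : Prop :=
  (forall w, (0 <= tau w)%E) /\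
  forall t, 0 <= t -> nat_filtration X t [set w | (tau w <= t%:E)%E].

Definition exit_time (lam0 lam1 al be : R) (X : R -> Omega -> nat) (psi : R)
    (w : Omega) : \bar R :=
  ereal_inf [set t%:E | t in [set t : R | 0 <= t /\
                 ~ (al < psi * lik lam0 lam1 X t w < be)]].

(* Bayes cost  Jbar(psi; tau) =
   1/(1+psi) E_0[ int_0^tau (1 + psi L_t) dt + (a psi L_tau) /\ b ];
   on {tau = +oo} the time integral is +oo (terminal term irrelevant, set 0). *)
Definition bayes_cost (P : probability Omega R) (lam0 lam1 a b : R)
    (X : R -> Omega -> nat) (psi : R) (tau : Omega -> \bar R) : \bar R :=
  ((1 + psi)^-1)%:E *
  \int[P]_w (\int[lebesgue_measure]_(t in [set t : R | (0 <= t)%R /\ (t%:E < tau w)%E])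
               (1 + psi * lik lam0 lam1 X t w)%R%:E
             + (if tau w is r%:E then (Num.min (a * psi * lik lam0 lam1 X r w) b)%R%:E
                else 0))%E.

End defs.

(* Main.v *)
Require Import Defs.
From HB Require Import structures.
From mathcomp Require Import all_boot all_order all_algebra.
From mathcomp Require Import all_classical all_reals all_analysis.
From mathcomp Require Import ring lra.
Set Implicit Arguments. Unset Strict Implicit. Unset Printing Implicit Defensive.
Import Order.TTheory GRing.Theory Num.Theory.
Import numFieldNormedType.Exports.
Local Open Scope classical_set_scope.
Local Open Scope ring_scope.
Definition Fp {R : realType} (x : R -> nat) (c mu t : R) : R := (x t)%:R * c - mu * t.

Definition good_path {R : realType} (x : R -> nat) :=
  [/\ x 0 = 0%N, (forall s t, 0 <= s -> s <= t -> (x s <= x t)%N) &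
   (forall t, 0 <= t -> exists2 delta, 0 < delta &
      forall s, t <= s -> s < t + delta -> x s = x t)].

Definition no_jump_at {R : realType} (x : R -> nat) (c mu v : R) :=
  forall s (n : nat), 0 < s -> n%:R * c - mu * s = v ->
    exists h, 0 < h /\ h <= s /\ x (s - h) = x s.
Lemma lower_margin (R : realType) (x : R -> nat) (c mu v T : R) :
  0 < mu -> good_path x -> no_jump_at x c mu v ->
  (forall t, 0 <= t -> t <= T -> v < Fp x c mu t) ->
  exists2 eta, 0 < eta & forall t, 0 <= t -> t <= T -> v + eta <= Fp x c mu t.
Proof.
move=> mu0 [x0 xmono xrc] nj hyp.
suff: forall K, exists2 eta, 0 < eta &
    forall t, 0 <= t -> t <= T -> (x t < K)%N -> v + eta <= Fp x c mu t.
  case: (lerP 0 T) => T0; last first.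
    by move=> _; exists 1 => // t t0 tT; exfalso; lra.
  move=> /(_ (x T).+1) [e e0 H]; exists e => // t t0 tT; apply: H => //.
  by rewrite ltnS; apply: xmono.
elim=> [|K [e1 e10 H1]]; first by exists 1.
have [[t0 [t00 t0T xt0]]|nE] :=
  pselect (exists t, [/\ 0 <= t, t <= T & x t = K]); last first.
  exists e1 => // t t0 tT; rewrite ltnS leq_eqVlt => /orP[/eqP xtK|]; last exact: H1.
  by exfalso; apply: nE; exists t.
pose Z := [set t | [/\ 0 <= t, t <= T & (x t <= K)%N]].
pose sig := sup Z.
have hasZ : has_sup Z.
  split; first by exists t0; split => //; rewrite xt0.
  by exists T => z [].
have t0sig : t0 <= sig by apply: sup_upper_bound => //; split => //; rewrite xt0.
have sigT : sig <= T by apply: ge_sup; [case: hasZ|move=> z []].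
have sig0 : 0 <= sig by lra.
have key : v < K%:R * c - mu * sig.
  rewrite ltNge; apply/negP => hle.
  have xsigK : (K <= x sig)%N by rewrite -xt0; apply: xmono.
  case: (leqP (x sig) K) => xsig.
    have xs : x sig = K by apply/eqP; rewrite eqn_leq xsig xsigK.
    by have := hyp sig sig0 sigT; rewrite /Fp xs; lra.
  have t0lt : t0 < sig.
    rewrite lt_neqAle t0sig andbT; apply/negP => /eqP et.
    by move: xsig; rewrite -et xt0 ltnn.
  have xs_int : forall s, t0 <= s -> s < sig -> x s = K.
    move=> s t0s ssig.
    have hs : 0 < sig - s by lra.
    have [z [z0 zT xz] sz] := sup_adherent hs hasZ.
    rewrite -/sig in sz.
    apply/eqP; rewrite eqn_leq; apply/andP; split.
      apply: leq_trans xz; apply: xmono; lra.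
    by rewrite -xt0; apply: xmono; lra.
  have ht0 := hyp t0 t00 t0T; rewrite /Fp xt0 in ht0.
  case: (ltrP (K%:R * c - mu * sig) v) => hlt.
    pose ss := (K%:R * c - v) / mu.
    have muss : mu * ss = K%:R * c - v by rewrite /ss mulrC -mulrA mulVf ?mulr1 ?gt_eqF.
    have t0ss : t0 <= ss.
      rewrite -(ler_pM2l mu0) muss; lra.
    have sssig : ss < sig.
      rewrite -(ltr_pM2l mu0) muss; lra.
    have := hyp ss (le_trans t00 t0ss) (le_trans (ltW sssig) sigT).
    by rewrite /Fp xs_int //; lra.
  have heq : K%:R * c - mu * sig = v by lra.
  have [h [h0 [hs xh]]] := nj sig K (lt_le_trans (le_lt_trans t00 t0lt) (lexx _)) heq.
  pose s := Num.max t0 (sig - h).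
  have t0s : t0 <= s by rewrite /s le_max lexx.
  have ssig : s < sig by rewrite /s gt_max t0lt; lra.
  have xsK := xs_int s t0s ssig.
  have : leq (x (sig - h)) (x s) by apply: xmono; [lra | rewrite /s le_max lexx orbT].
  by rewrite xh xsK leqNgt xsig.
exists (Num.min e1 (K%:R * c - mu * sig - v)).
  by rewrite lt_min e10 /=; lra.
move=> t t0' tT; rewrite ltnS leq_eqVlt => /orP[/eqP xtK|xtK]; last first.
  by apply: le_trans (H1 t t0' tT xtK); rewrite lerD2l ge_min lexx.
have tsig : t <= sig by apply: sup_upper_bound => //; split => //; rewrite xtK.
rewrite /Fp xtK.
have : Num.min e1 (K%:R * c - mu * sig - v) <= K%:R * c - mu * sig - v by rewrite ge_min lexx orbT.
have : mu * t <= mu * sig by rewrite ler_pM2l.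
lra.
Qed.
Lemma upper_margin (R : realType) (x : R -> nat) (c mu w T : R) :
  0 < mu -> good_path x ->
  (forall t, 0 <= t -> t <= T -> Fp x c mu t < w) ->
  exists2 eta, 0 < eta & forall t, 0 <= t -> t <= T -> Fp x c mu t <= w - eta.
Proof.
move=> mu0 [x0 xmono xrc] hyp.
suff: forall K, exists2 eta, 0 < eta &
    forall t, 0 <= t -> t <= T -> (x t < K)%N -> Fp x c mu t <= w - eta.
  case: (lerP 0 T) => T0; last first.
    by move=> _; exists 1 => // t t0 tT; exfalso; lra.
  move=> /(_ (x T).+1) [e e0 H]; exists e => // t t0 tT; apply: H => //.
  by rewrite ltnS; apply: xmono.
elim=> [|K [e1 e10 H1]]; first by exists 1.
have [[t0 [t00 t0T xt0]]|nE] :=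
  pselect (exists t, [/\ 0 <= t, t <= T & x t = K]); last first.
  exists e1 => // t t0 tT; rewrite ltnS leq_eqVlt => /orP[/eqP xtK|]; last exact: H1.
  by exfalso; apply: nE; exists t.
pose Z := [set t | [/\ 0 <= t, t <= T & (K <= x t)%N]].
pose rho := inf Z.
have Zne : Z !=set0 by exists t0; split => //; rewrite xt0.
have hasZ : has_inf Z by split => //; exists 0 => z [].
have rhot : forall t, Z t -> rho <= t by apply: ge_inf; case: hasZ.
have rho0 : 0 <= rho by apply: lb_le_inf => // z [].
have rhot0 : rho <= t0 by apply: rhot; split => //; rewrite xt0.
have xrho : x rho = K.
  have [d d0 Hd] := xrc rho rho0.
  have [z [z0 zT xz] zlt] := inf_adherent d0 hasZ.
  have rz : rho <= z by apply: rhot.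
  have := Hd z rz zlt => exz.
  apply/eqP; rewrite eqn_leq; apply/andP; split.
    by rewrite -xt0; apply: xmono.
  by rewrite -exz.
have key : K%:R * c - mu * rho < w.
  by have := hyp rho rho0 (le_trans rhot0 t0T); rewrite /Fp xrho.
exists (Num.min e1 (w - (K%:R * c - mu * rho))).
  by rewrite lt_min e10 /=; lra.
move=> t t0' tT; rewrite ltnS leq_eqVlt => /orP[/eqP xtK|xtK]; last first.
  apply: le_trans (H1 t t0' tT xtK) _; rewrite lerD2l lerN2 ge_min lexx //.
have trho : rho <= t by apply: rhot; split => //; rewrite xtK.
rewrite /Fp xtK.
have : Num.min e1 (w - (K%:R * c - mu * rho)) <= w - (K%:R * c - mu * rho) by rewrite ge_min lexx orbT.
have : mu * rho <= mu * t by rewrite ler_pM2l.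
lra.
Qed.
Lemma cvg_semicont {R : realType} {T : Type} {F : set_system T} {FF : Filter F}
  (g : T -> \bar R) (l : \bar R) :
  (forall r : R, (r%:E < l)%E -> \forall x \near F, (r%:E <= g x)%E) ->
  (forall r : R, (l < r%:E)%E -> \forall x \near F, (g x <= r%:E)%E) ->
  g @ F --> l.
Proof.
move=> lo up; case: l lo up => [r||] lo up.
- have H : forall e : R, 0 < e -> \forall x \near F,
      ((r - e)%:E <= g x)%E /\ (g x <= (r + e)%:E)%E.
    move=> e e0; have h1 := lo (r - e) ltac:(rewrite lte_fin; lra).
    have h2 := up (r + e) ltac:(rewrite lte_fin; lra).
    by near=> y; split; [near: y; exact: h1 | near: y; exact: h2].
  apply/fine_cvgP; split.
    have := H 1 ltr01; apply: filterS => y [].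
    by case: (g y).
  apply/cvgrPdist_le => e e0; have := H e e0; apply: filterS => y /=.
  case: (g y) => [z [] | [] | []] //=; rewrite !lee_fin => h1 h2.
  rewrite ler_norml; apply/andP; split; lra.
- by apply/cvgeyPge => A; apply: lo; exact: ltry.
- by apply/cvgeNyPle => A; apply: up; exact: ltNyr.
Unshelve. all: by end_near.
Qed.
Definition tau {R : realType} (x : R -> nat) (c mu A B u : R) : \bar R :=
  ereal_inf [set t%:E | t in [set t : R | 0 <= t /\ ~ (A < u + Fp x c mu t < B)]].

Lemma tau_ge {R : realType} (x : R -> nat) (c mu A B u r : R) :
  (forall t, 0 <= t -> t < r -> A < u + Fp x c mu t < B) ->
  (r%:E <= tau x c mu A B u)%E.
Proof.
move=> H; apply: le_ereal_inf_tmp => _ [t [t0 nb] <-]; rewrite lee_fin.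
by rewrite leNgt; apply/negP => tr; apply: nb; apply: H.
Qed.

Lemma tau_le {R : realType} (x : R -> nat) (c mu A B u t : R) :
  0 <= t -> ~ (A < u + Fp x c mu t < B) -> (tau x c mu A B u <= t%:E)%E.
Proof. by move=> t0 nb; apply: ereal_inf_lbound; exists t. Qed.

Lemma tau_lt_ex {R : realType} (x : R -> nat) (c mu A B u r : R) :
  (tau x c mu A B u < r%:E)%E ->
  exists t, [/\ 0 <= t, t < r & ~ (A < u + Fp x c mu t < B)].
Proof.
move=> H; apply: contrapT => nE; move: H; apply/negP; rewrite -leNgt.
apply: tau_ge => t t0 tr; apply/negPn/negP => nb; apply: nE; exists t; split => //.
exact/negP.
Qed.

Lemma Fp0 {R : realType} (x : R -> nat) c mu : x 0 = 0%N -> Fp x c mu 0 = 0.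
Proof. by move=> x0; rewrite /Fp x0 mul0r mulr0 subrr. Qed.

Lemma D1 {R : realType} (x : R -> nat) (c mu A B u0 : R) {T : Type}
  {F : set_system T} {FF : Filter F} (u : T -> R) :
  0 < mu -> good_path x -> A < u0 -> u0 < B ->
  no_jump_at x c mu (A - u0) -> no_jump_at x c mu (B - u0) ->
  u @ F --> u0 ->
  tau x c mu A B (u y) @[y --> F] --> tau x c mu A B u0.
Proof.
move=> mu0 gx Au0 u0B njA njB uc.
have [x0 xmono xrc] := gx.
apply: cvg_semicont.
- move=> r rlt.
  have band : forall t, 0 <= t -> t <= r -> A < u0 + Fp x c mu t < B.
    move=> t t0 tr; apply/negPn/negP => nb.
    have := tau_le t0 (elimN idP nb) => /(lt_le_trans rlt).
    by rewrite lte_fin; lra.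
  have [e1 e10 H1] : exists2 eta, 0 < eta & forall t, 0 <= t -> t <= r ->
      (A - u0) + eta <= Fp x c mu t.
    apply: lower_margin => // t t0 tr; have /andP[h1 h2] := band t t0 tr; lra.
  have [e2 e20 H2] : exists2 eta, 0 < eta & forall t, 0 <= t -> t <= r ->
      Fp x c mu t <= (B - u0) - eta.
    apply: upper_margin => // t t0 tr; have /andP[h1 h2] := band t t0 tr; lra.
  have e0 : 0 < Num.min e1 e2 by rewrite lt_min e10 e20.
  move/cvgrPdist_lt : uc => /(_ _ e0); apply: filterS => y hy.
  apply: tau_ge => t t0 tr.
  have := H1 t t0 (ltW tr); have := H2 t t0 (ltW tr).
  move: hy; rewrite lt_min => /andP[]; rewrite !ltr_norml => /andP[? ?] /andP[? ?].
  by move=> ? ?; apply/andP; split; lra.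
- move=> r rgt.
  have [t [t0 tr nb]] := tau_lt_ex rgt.
  have [t' [t'0 t'r strict]] : exists t', [/\ 0 <= t', t' < r &
      (u0 + Fp x c mu t' < A \/ B < u0 + Fp x c mu t')].
    move/negP: nb; rewrite negb_and -!leNgt => /orP[hA|hB].
      case: (ltrP (u0 + Fp x c mu t) A) => hA'.
        by exists t; split => //; left.
      have eqA : u0 + Fp x c mu t = A by apply/eqP; rewrite eq_le hA hA'.
      have [d d0 Hd] := xrc t t0.
      pose t' := t + Num.min d (r - t) / 2.
      have m0 : 0 < Num.min d (r - t) by rewrite lt_min d0 /=; lra.
      have m1 : Num.min d (r - t) <= d by rewrite ge_min lexx.
      have m2 : Num.min d (r - t) <= r - t by rewrite ge_min lexx orbT.
      exists t'; split; rewrite /t'; try lra.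
      left; move: eqA; rewrite /Fp Hd; try lra.
      have : 0 < mu * (Num.min d (r - t) / 2) by apply: mulr_gt0 => //; lra.
      by rewrite mulrDr; lra.
    case: (ltrP B (u0 + Fp x c mu t)) => hB'.
      by exists t; split => //; right.
    have eqB : u0 + Fp x c mu t = B by apply/eqP; rewrite eq_le hB hB'.
    have tpos : 0 < t.
      rewrite lt_neqAle t0 andbT; apply/negP => /eqP et.
      by move: eqB; rewrite -et Fp0 //; lra.
    have [h [h0 [hs xh]]] := njB t (x t) tpos ltac:(rewrite /Fp in eqB; lra).
    exists (t - h); split; try lra.
    right; move: eqB; rewrite /Fp xh.
    have : 0 < mu * h by apply: mulr_gt0.
    by rewrite mulrBr; lra.
  have gap : 0 < Num.min (A - (u0 + Fp x c mu t')) ((u0 + Fp x c mu t') - B)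
             \/ True by right.
  case: strict => hs.
    have g0 : 0 < A - (u0 + Fp x c mu t') by lra.
    move/cvgrPdist_lt : uc => /(_ _ g0); apply: filterS => y hy.
    apply: le_trans (tau_le t'0 _) _; last by rewrite lee_fin ltW.
    move: hy; rewrite ltr_norml => /andP[? ?]; apply/negP; rewrite negb_and -!leNgt.
    by apply/orP; left; lra.
  have g0 : 0 < (u0 + Fp x c mu t') - B by lra.
  move/cvgrPdist_lt : uc => /(_ _ g0); apply: filterS => y hy.
  apply: le_trans (tau_le t'0 _) _; last by rewrite lee_fin ltW.
  move: hy; rewrite ltr_norml => /andP[? ?]; apply/negP; rewrite negb_and -!leNgt.
  by apply/orP; right; lra.
Qed.
Definition theta {R : realType} (x : R -> nat) (c mu V : R) : \bar R :=
  ereal_inf [set t%:E | t in [set t : R | 0 <= t /\ ~ (V < Fp x c mu t <= 0)]].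

Lemma theta_ge {R : realType} (x : R -> nat) (c mu V r : R) :
  (forall t, 0 <= t -> t < r -> V < Fp x c mu t <= 0) ->
  (r%:E <= theta x c mu V)%E.
Proof.
move=> H; apply: le_ereal_inf_tmp => _ [t [t0 nb] <-]; rewrite lee_fin.
by rewrite leNgt; apply/negP => tr; apply: nb; apply: H.
Qed.

Lemma theta_le {R : realType} (x : R -> nat) (c mu V t : R) :
  0 <= t -> ~ (V < Fp x c mu t <= 0) -> (theta x c mu V <= t%:E)%E.
Proof. by move=> t0 nb; apply: ereal_inf_lbound; exists t. Qed.

Lemma theta_lt_ex {R : realType} (x : R -> nat) (c mu V r : R) :
  (theta x c mu V < r%:E)%E ->
  exists t, [/\ 0 <= t, t < r & ~ (V < Fp x c mu t <= 0)].
Proof.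
move=> H; apply: contrapT => nE; move: H; apply/negP; rewrite -leNgt.
apply: theta_ge => t t0 tr; apply/negPn/negP => nb; apply: nE; exists t; split => //.
exact/negP.
Qed.

Lemma D3 {R : realType} (x : R -> nat) (c mu A B : R) {T : Type}
  {F : set_system T} {FF : Filter F} (u : T -> R) :
  0 < mu -> good_path x -> A < B ->
  no_jump_at x c mu (A - B) ->
  u @ F --> B -> (\forall y \near F, u y < B) ->
  tau x c mu A B (u y) @[y --> F] --> theta x c mu (A - B).
Proof.
move=> mu0 gx AB njA uc ult.
have [x0 xmono xrc] := gx.
apply: cvg_semicont.
- move=> r rlt.
  have band : forall t, 0 <= t -> t <= r -> A - B < Fp x c mu t <= 0.
    move=> t t0 tr; apply/negPn/negP => nb.
    have := theta_le t0 (elimN idP nb) => /(lt_le_trans rlt).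
    by rewrite lte_fin; lra.
  have [e1 e10 H1] : exists2 eta, 0 < eta & forall t, 0 <= t -> t <= r ->
      (A - B) + eta <= Fp x c mu t.
    apply: lower_margin => // t t0 tr; have /andP[h1 h2] := band t t0 tr; lra.
  move/cvgrPdist_lt : uc => /(_ _ e10) => hn.
  near=> y; apply: tau_ge => t t0 tr.
  have := H1 t t0 (ltW tr); have /andP[_ h0] := band t t0 (ltW tr).
  have hy : `|B - u y| < e1 by near: y.
  have hy2 : u y < B by near: y.
  move: hy; rewrite ltr_norml => /andP[? ?].
  by move=> ?; apply/andP; split; lra.
- move=> r rgt.
  have [t [t0 tr nb]] := theta_lt_ex rgt.
  move/negP: nb; rewrite negb_and -ltNge -leNgt => /orP[hA|hB].
    apply: filterS ult => y hy.
    apply: le_trans (tau_le t0 _) _; last by rewrite lee_fin ltW.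
    by apply/negP; rewrite negb_and -!leNgt; apply/orP; left; lra.
  move/cvgrPdist_lt : uc => /(_ _ hB); apply: filterS => y hy.
  apply: le_trans (tau_le t0 _) _; last by rewrite lee_fin ltW.
  move: hy; rewrite ltr_norml => /andP[? ?]; apply/negP; rewrite negb_and -!leNgt.
  by apply/orP; right; lra.
Unshelve. all: by end_near.
Qed.

Lemma D2 {R : realType} (x : R -> nat) (c mu A B : R) {T : Type}
  {F : set_system T} {FF : Filter F} (u : T -> R) :
  0 < mu -> good_path x ->
  u @ F --> A -> (\forall y \near F, A < u y) ->
  tau x c mu A B (u y) @[y --> F] --> 0%E.
Proof.
move=> mu0 [x0 xmono xrc] uc ugt.
apply: cvg_semicont.
- move=> r; rewrite lte_fin => r0; apply: nearW => y.
  by apply: tau_ge => t t0 tr; exfalso; lra.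
- move=> r; rewrite lte_fin => r0.
  have [d d0 Hd] := xrc 0 (lexx 0).
  pose m := Num.min d r.
  have m0 : 0 < m by rewrite lt_min d0 r0.
  have em0 : 0 < mu * m by apply: mulr_gt0.
  move/cvgrPdist_lt : uc => /(_ _ em0) => hn.
  near=> y.
  have hy : `|A - u y| < mu * m by near: y.
  have hy2 : A < u y by near: y.
  pose t := (u y - A) / mu.
  have mut : mu * t = u y - A by rewrite /t mulrC -mulrA mulVf ?mulr1 ?gt_eqF.
  have t0 : 0 <= t by rewrite /t divr_ge0 //; lra.
  have tm : t < m.
    rewrite -(ltr_pM2l mu0) mut; move: hy; rewrite ltr_norml => /andP[? ?]; lra.
  have m1 : m <= d by rewrite ge_min lexx.
  have m2 : m <= r by rewrite ge_min lexx orbT.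
  apply: le_trans (tau_le t0 _) _; last by rewrite lee_fin; lra.
  rewrite /Fp Hd ?x0; try lra.
Unshelve. all: by end_near.
Qed.
Lemma pois_sum {R : realType} (r : R) : 0 < r ->
  (\sum_(k <oo) (poisson_pmf r k)%:E = 1)%E.
Proof.
move=> r0; have h : (poisson_prob r 0 [set: nat] = 1)%E.
  exact: (@probability_setT _ _ _ (poisson_prob r 0)).
move: h; rewrite /poisson_prob r0 => <-; rewrite nneseries_esumT //.
by move=> k; rewrite lee_fin poisson_pmf_ge0.
Qed.

Lemma pois0 {R : realType} (r : R) : 0 < r -> poisson_pmf r 0 = expR (- r).
Proof. by move=> r0; rewrite /poisson_prob /poisson_pmf r0 expr0 mul1r fact0 invr1 mul1r. Qed.
Definition Aset {d} {Omega : measurableType d} {R : realType}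
  (X : R -> Omega -> nat) (s h : R) (k : nat) : set Omega :=
  X (s - h) @^-1` [set k] `&` X s @^-1` [set k].

Lemma incr0_prob {d} {Omega : measurableType d} {R : realType}
  (P : probability Omega R) (lam : R) (X : R -> Omega -> nat) (s h : R) :
  poisson_process P lam X -> 0 < lam -> 0 < h -> h < s ->
  P (\bigcup_k Aset X s h k) = (expR (- (lam * h)))%:E.
Proof.
move=> [X0 Xmono Xrc Xmeas Xfidi] lam0 h0 hs.
have mA : forall k, measurable (Aset X s h k).
  by move=> k; apply: measurableI; apply: Xmeas.
rewrite measure_semi_bigcup //; last first.
- by apply: bigcupT_measurable.
- by move=> i j _ _ [w [[/= h1 h2] [h3 h4]]]; rewrite -h2 -h4.
have PA : forall k, P (Aset X s h k) =
    (poisson_pmf (lam * (s - h)) k * expR (- (lam * h)))%:E.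
  move=> k.
  pose t := fun i : nat => if i == 0%N then 0 else if i == 1%N then s - h else s.
  pose kk := fun i : nat => if i == 0%N then k else 0%N.
  have ht0 : t 0%N = 0 by [].
  have hinc : forall i, (i < 2)%N -> t i < t i.+1.
    by case=> [|[|]] //= _; rewrite /t /=; lra.
  have := Xfidi 2%N t kk ht0 hinc.
  rewrite !big_ord_recl big_ord0 mulr1 /= /t /= subr0.
  have -> : s - (s - h) = h by lra.
  rewrite pois0; last by apply: mulr_gt0.
  move=> <-; congr (P _); apply/seteqP; split => w.
    move=> [/= e1 e2] i /= ilt.
    case: i ilt => [|[|]] //= _; rewrite /kk /=.
      by rewrite X0 subn0.
    by rewrite e1 e2 subnn.
  move=> H; have := H 0%N erefl; have := H 1%N erefl.
  rewrite /kk /= X0 subn0 => e2 e1; split => //=.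
  rewrite /= in e1 e2; apply/eqP; rewrite -e1 eqn_leq.
  rewrite -subn_eq0 e2 eqxx /=; apply: Xmono; lra.
transitivity (\sum_(0 <= i <oo) ((expR (- (lam * h)))%:E * (poisson_pmf (lam * (s - h)) i)%:E))%E.
  by apply: eq_eseriesr => i _; rewrite -EFinM mulrC; exact: PA.
rewrite nneseriesZl; last by move=> i _; rewrite lee_fin poisson_pmf_ge0.
rewrite pois_sum ?mule1 //; apply: mulr_gt0 => //; lra.
Qed.
Lemma jump_negligible {d} {Omega : measurableType d} {R : realType}
  (P : probability Omega R) (lam : R) (X : R -> Omega -> nat) (s : R) :
  poisson_process P lam X -> 0 < lam -> 0 < s ->
  P.-negligible [set w | forall h, 0 < h -> h <= s -> X (s - h) w <> X s w].
Proof.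
move=> hX lam0 s0.
have hX' := hX; case: hX' => [X0 Xmono Xrc Xmeas Xfidi].
pose hm := fun m : nat => s / (m.+2)%:R.
have hm0 : forall m, 0 < hm m by move=> m; rewrite /hm divr_gt0 // ltr0n.
have hms : forall m, hm m < s.
  move=> m; rewrite /hm ltr_pdivrMr ?ltr0n //.
  by rewrite -[X in X < _]mulr1 ltr_pM2l // ltr1n.
pose B := fun m => \bigcup_k Aset X s (hm m) k.
have mB : forall m, measurable (B m).
  by move=> m; apply: bigcupT_measurable => k; apply: measurableI; apply: Xmeas.
exists (\bigcap_m ~` B m); split.
- by apply: bigcapT_measurable => m; apply: measurableC.
- have bnd : forall m, (P (\bigcap_m ~` B m) <= (lam * hm m)%:E)%E.
    move=> m; apply: (@le_trans _ _ (P (~` B m))).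
      apply: le_measure; rewrite ?inE.
      + by apply: bigcapT_measurable => m'; apply: measurableC.
      + exact: measurableC.
      + by move=> w /(_ m I).
    rewrite probability_setC // (incr0_prob hX) // -EFinB lee_fin.
    by have := expR_ge1Dx (- (lam * hm m)); lra.
  have ge0 : (0 <= P (\bigcap_m ~` B m))%E by [].
  move: ge0 bnd; case: (P (\bigcap_m ~` B m)) => [r||] //=.
    move=> r0 bnd; rewrite lee_fin in r0; congr EFin; apply/eqP; rewrite eq_le r0 andbT.
    rewrite leNgt; apply/negP => rpos.
    have x0 : 0 <= lam * s / r by rewrite divr_ge0 // ?mulr_ge0 // ltW.
    have := archi_boundP x0; set M := Num.bound _ => hM.
    have := bnd M; rewrite lee_fin /hm.
    have : lam * s < r * M%:R.
      by rewrite -ltr_pdivrMl //; rewrite mulrC.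
    have : r * M%:R < r * (M.+2)%:R by rewrite ltr_pM2l // ltr_nat.
    move=> h1 h2; rewrite mulrA ler_pdivlMr ?ltr0n //; lra.
  by move=> _ /(_ 0%N).
- move=> w /= H m _ [k _ [/= e1 e2]].
  by apply: (H (hm m) (hm0 m) (ltW (hms m))); rewrite e1 e2.
Qed.
Lemma nojump_ae {d} {Omega : measurableType d} {R : realType}
  (P : probability Omega R) (lam : R) (X : R -> Omega -> nat) (c mu v : R) :
  poisson_process P lam X -> 0 < lam -> 0 < mu ->
  P.-negligible [set w | ~ no_jump_at (X ^~ w) c mu v].
Proof.
move=> hX lam0 mu0.
pose sn := fun n : nat => (n%:R * c - v) / mu.
pose S := fun n => [set w | 0 < sn n /\
   forall h, 0 < h -> h <= sn n -> X (sn n - h) w <> X (sn n) w].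
apply: (@negligibleS _ _ _ _ (\bigcup_n S n)).
  move=> w /= nj; apply: contrapT => nin; apply: nj => s n s0 eq.
  have esn : s = sn n.
    by rewrite /sn -eq; field; rewrite gt_eqF.
  apply: contrapT => nex; apply: nin; exists n => //; split; rewrite -esn //.
  by move=> h h0 hs e; apply: nex; exists h.
apply: negligible_bigcup => n.
case: (ltrP 0 (sn n)) => hs.
  apply: negligibleS (jump_negligible hX lam0 hs).
  by move=> w [].
apply: negligibleS (negligible_set0 P) => w [] ; lra.
Qed.
Lemma bridge {R : realType} {F : set_system R} {FF : Filter F}
  (g h : R -> \bar R) (l : \bar R) :
  (\forall phi \near F, h phi = g phi) -> h @ F --> l -> g @ F --> l.
Proof. by move=> e hl; apply: cvg_trans hl; apply: near_eq_cvg. Qed.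

Lemma link_exit {d} {Omega : measurableType d} {R : realType}
  (X : R -> Omega -> nat) (lam0 lam1 al be psi : R) w :
  0 < al -> 0 < be -> 0 < psi ->
  exit_time lam0 lam1 al be X psi w =
  tau (X ^~ w) (ln (lam1 / lam0)) (lam1 - lam0) (ln al) (ln be) (ln psi).
Proof.
move=> al0 be0 psi0; rewrite /exit_time /tau; congr ereal_inf.
congr image; apply/funext => t /=; apply/propext.
have eal : expR (ln al) = al by rewrite lnK // posrE.
have ebe : expR (ln be) = be by rewrite lnK // posrE.
have ep : psi * lik lam0 lam1 X t w =
    expR (ln psi + Fp (X ^~ w) (ln (lam1 / lam0)) (lam1 - lam0) t).
  by rewrite expRD lnK ?posrE.
by rewrite ep -{1}eal -{1}ebe !ltr_expR.
Qed.

Lemma link_theta {d} {Omega : measurableType d} {R : realType}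
  (X : R -> Omega -> nat) (lam0 lam1 al be : R) w :
  0 < al -> 0 < be ->
  ereal_inf [set t%:E | t in [set t : R | 0 <= t /\
              ~ (al / be < lik lam0 lam1 X t w <= 1)]] =
  theta (X ^~ w) (ln (lam1 / lam0)) (lam1 - lam0) (ln al - ln be).
Proof.
move=> al0 be0; rewrite /theta; congr ereal_inf.
congr image; apply/funext => t /=; apply/propext.
have eab : expR (ln al - ln be) = al / be.
  by rewrite expRD expRN !lnK ?posrE.
by rewrite -eab -expR0 /lik ltr_expR ler_expR.
Qed.
Theorem proposition3p2 (d : measure_display) (Omega : measurableType d)
  (R : realType) (P : probability Omega R) (X : R -> Omega -> nat)
  (lam0 lam1 a b al be : R) :
  0 < lam0 -> lam0 < lam1 -> 0 < a -> 0 < b ->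
  a^-1 + b^-1 < lam1 - lam0 ->
  poisson_process P lam0 X ->
  (* al, be are the optimal stopping boundaries alpha*, beta* *)
  0 < al -> al < b / a -> b / a < be ->
  (forall psi, 0 < psi ->
     stopping_time X (exit_time lam0 lam1 al be X psi) /\
     forall tau, stopping_time X tau ->
       (bayes_cost P lam0 lam1 a b X psi (exit_time lam0 lam1 al be X psi)
        <= bayes_cost P lam0 lam1 a b X psi tau)%E) ->
  [/\ (* (1) *)
      forall phi0, al < phi0 -> phi0 < be ->
        {ae P, forall w, exit_time lam0 lam1 al be X phi w
           @[phi --> phi0] --> exit_time lam0 lam1 al be X phi0 w},
      (* (2) *)
      {ae P, forall w, exit_time lam0 lam1 al be X phi w
           @[phi --> al^'+] --> 0%E}
    & (* (3) *)
      {ae P, forall w, exit_time lam0 lam1 al be X phi w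
           @[phi --> be^'-] -->
         ereal_inf [set t%:E | t in [set t : R | 0 <= t /\
              ~ (al / be < lik lam0 lam1 X t w <= 1)]]} ].
Proof.
move=> lam00 lam01 a0 b0 _ hX al0 alba bab _.
have albe : al < be by apply: lt_trans bab.
have be0 : 0 < be by apply: lt_trans albe.
have hX' := hX; case: hX' => [X0 Xmono Xrc _ _].
have mu0 : 0 < lam1 - lam0 by lra.
have gx : forall w, good_path (X ^~ w).
  by move=> w; split; [exact: X0 | exact: Xmono | exact: Xrc].
split.
- move=> phi0 alp pbe.
  have p0 : 0 < phi0 by apply: lt_trans alp.
  have nA := nojump_ae (ln (lam1 / lam0)) (ln al - ln phi0) hX lam00 mu0.
  have nB := nojump_ae (ln (lam1 / lam0)) (ln be - ln phi0) hX lam00 mu0.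
  have hae : almost_everywhere P
      [set w | no_jump_at (X ^~ w) (ln (lam1 / lam0)) (lam1 - lam0) (ln al - ln phi0)
            /\ no_jump_at (X ^~ w) (ln (lam1 / lam0)) (lam1 - lam0) (ln be - ln phi0)].
    rewrite /almost_everywhere; apply: negligibleS (negligibleU nA nB) => w /=.
    by move/not_andP.
  apply: filterS hae => w [njA njB].
  rewrite link_exit //.
  apply: (@bridge _ _ _ _ (fun phi => tau (X ^~ w) (ln (lam1 / lam0)) (lam1 - lam0)
                                (ln al) (ln be) (ln phi))).
    have hn : \forall phi \near phi0, `|phi0 - phi| < phi0.
      by move/cvgrPdist_lt : (@cvg_id _ (nbhs phi0)) => /(_ _ p0).
    near=> phi; rewrite link_exit //.
    have : `|phi0 - phi| < phi0 by near: phi.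
    by rewrite ltr_norml => /andP[_ ?]; lra.
  have h1 : ln al < ln phi0 by rewrite ltr_ln ?posrE.
  have h2 : ln phi0 < ln be by rewrite ltr_ln ?posrE.
  have HD := @D1 R (X ^~ w) (ln (lam1 / lam0)) (lam1 - lam0) (ln al) (ln be)
    (ln phi0) R (nbhs phi0) _ (@ln R) mu0 (gx w) h1 h2 njA njB (continuous_ln p0).
  exact: HD.
- apply: aeW => w.
  apply: (@bridge _ _ _ _ (fun phi => tau (X ^~ w) (ln (lam1 / lam0)) (lam1 - lam0)
                                (ln al) (ln be) (ln phi))).
    near=> phi; rewrite link_exit //.
    have : al < phi by near: phi; apply: nbhs_right_gt.
    lra.
  have hc : (@ln R) @ al^'+ --> ln al.
    exact: cvg_at_right_filter (continuous_ln al0).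
  have hg : \forall phi \near al^'+, ln al < ln phi.
    have hr := nbhs_right_gt al.
    near=> phi; have alp : al < phi by near: phi; exact: hr.
    rewrite ltr_ln ?posrE //; lra.
  have HD := @D2 R (X ^~ w) (ln (lam1 / lam0)) (lam1 - lam0) (ln al) (ln be)
    R (at_right al) _ (@ln R) mu0 (gx w) hc hg.
  exact: HD.
- have nA := nojump_ae (ln (lam1 / lam0)) (ln al - ln be) hX lam00 mu0.
  have hae : almost_everywhere P
      [set w | no_jump_at (X ^~ w) (ln (lam1 / lam0)) (lam1 - lam0) (ln al - ln be)].
    rewrite /almost_everywhere; apply: negligibleS nA => w /= hw.
    exact: hw.
  apply: filterS hae => w nj.
  rewrite link_theta //.
  apply: (@bridge _ _ _ _ (fun phi => tau (X ^~ w) (ln (lam1 / lam0)) (lam1 - lam0)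
                                (ln al) (ln be) (ln phi))).
    have hn := @nbhs_left_ltBl R be be be0.
    near=> phi.
    have hb : be - phi < be by near: phi; exact: hn.
    rewrite link_exit //; lra.
  have h1 : ln al < ln be by rewrite ltr_ln ?posrE.
  have hc : (@ln R) @ be^'- --> ln be.
    exact: cvg_at_left_filter (continuous_ln be0).
  have hg : \forall phi \near be^'-, ln phi < ln be.
    have hn := @nbhs_left_ltBl R be be be0.
    have hl := nbhs_left_lt be.
    near=> phi; have pb : phi < be by near: phi; exact: hl.
    have : be - phi < be by near: phi; exact: hn.
    rewrite ltr_ln ?posrE //; lra.
  have HD := @D3 R (X ^~ w) (ln (lam1 / lam0)) (lam1 - lam0) (ln al) (ln be)
    R (at_left be) _ (@ln R) mu0 (gx w) h1 nj hc hg.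
  exact: HD.
Unshelve. all: by end_near.
Qed.
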